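(* In the Fraïssé setting described in the context, the following are equivalent: (a) the pair $(G_0,G)$ is relatively extremely amenable and $Fix_{X_K}(G)$ is transitive with respect to $X_K$; (b) $X_K$ is the universal minimal space of $G_0$.
   Context: Setting: $L$ is a signature containing a binary relation symbol $<$, and $L_0=L\setminus\{<\}$. $K_0$ is a Fraïssé class of finite $L_0$-structures and $K$ is an order Fraïssé expansion of $K_0$: $K$ is a Fraïssé class of finite $L$-structures in each of which $<$ is a linear order, $K_0=\{A|L_0 : A\in K\}$, and $K$ is reasonable (for all $A_0\subset B_0$ in $K_0$ and every linear order $\prec$ on $A_0$ with $\langle A_0,\prec\rangle\in K$ there is a linear order $\prec'$ on $B_0$ extending $\prec$ with $\langle B_0,\prec'\rangle\in K$). Let $F=Flim(K)$ and $F_0=Flim(K_0)$ be the Fraïssé limits; then $F_0=F|L_0$. Let $G_0=Aut(F_0)$ and $G=Aut(F)\subset G_0$, with the pointwise convergence topology. Let $<_0=<^F$ be the order of $F$, viewed as an element of the space $LO(F_0)\subset\{0,1\}^{F_0\times F_0}$ of linear orderings of the underlying set of $F_0$ with the product topology, on which $G_0$ acts by $a\,(g\cdot\prec)\,b\iff g^{-1}a\prec g^{-1}b$. Set $X_K=\overline{G_0\cdot<_0}$ (the $K$-admissible orderings), a $G_0$-space, and $Fix_{X_K}(G)=\{\prec\in X_K: g\cdot\prec=\prec\ \forall g\in G\}$. A $G_0$-space is a compact Hausdorff space with a continuous $G_0$-action; it is minimal if it has no closed invariant subsets besides $\emptyset$ and itself; universal if every minimal $G_0$-space is its image under a continuous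 surjective equivariant map; the universal minimal space is the unique minimal universal one. $(G_0,G)$ is relatively extremely amenable if every $G_0$-space has a point fixed by every element of $G$. A subset $Y\subset X_K$ is transitive with respect to $X_K$ if $\overline{G_0 y}=X_K$ for every $y\in Y$. *)

(* Defs.v *)
From HB Require Import structures.
From mathcomp Require Import all_boot all_order all_algebra.
From mathcomp Require Import all_classical.
From mathcomp Require Import topology function_spaces.

Set Implicit Arguments.
Unset Strict Implicit.
Unset Printing Implicit Defensive.

Local Open Scope classical_set_scope.

(* A (general) first-order signature: relation symbols and function     *)
(* symbols (constants are function symbols of arity 0), with arities.   *)
Record signature := Signature {
  rsym : Type;
  rar : rsym -> nat;
  fsym : Type;
  far : fsym -> nat }.

Record structure (L : signature) (A : Type) := Structure {
  rint : forall r : rsym L, ('I_(rar r) -> A) -> bool;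
  fint : forall f : fsym L, ('I_(far f) -> A) -> A }.
Arguments Structure {L A}.
Arguments rint {L A} s r x : rename.
Arguments fint {L A} s f x : rename.

Definition embedding (L : signature) (A B : Type)
  (SA : structure L A) (SB : structure L B) (h : A -> B) : Prop :=
  [/\ injective h,
      (forall r (x : 'I_(rar r) -> A), rint SB r (h \o x) = rint SA r x) &
      (forall f (x : 'I_(far f) -> A), fint SB f (h \o x) = h (fint SA f x))].

Record aut (L : signature) (A : Type) (S : structure L A) := Aut {
  aut_fun :> A -> A;
  aut_inv : A -> A;
  aut_funK : cancel aut_fun aut_inv;
  aut_invK : cancel aut_inv aut_fun;
  aut_emb : embedding S S aut_fun }.

(* Finite L-structures: every finite structure is (isomorphic to) one    *)
(* whose carrier is 'I_n for some n.                                     *)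
Definition fstruct (L : signature) := {n : nat & structure L 'I_n}.
Definition fsize L (A : fstruct L) : nat := projT1 A.
Definition fst_str L (A : fstruct L) : structure L 'I_(fsize A) := projT2 A.

Definition fclass (L : signature) := fstruct L -> Prop.

Definition embeds (L : signature) (A : fstruct L) (B : Type)
  (S : structure L B) : Prop :=
  exists h : 'I_(fsize A) -> B, embedding (fst_str A) S h.

Definition isomorphic (L : signature) (A B : fstruct L) : Prop :=
  exists h : 'I_(fsize A) -> 'I_(fsize B),
    embedding (fst_str A) (fst_str B) h /\ bijective h.

(* Fraisse classes (Kechris-Pestov-Todorcevic): hereditary (this also    *)
(* gives closure under isomorphism), joint embedding, amalgamation,      *)
(* countably many isomorphism types, arbitrarily large finite members.   *)
Definition Fraisse_class (L : signature) (K : fclass L) : Prop :=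
  [/\ (forall A B : fstruct L, K A -> embeds B (fst_str A) -> K B),
      (forall A B : fstruct L, K A -> K B ->
         exists C, [/\ K C, embeds A (fst_str C) & embeds B (fst_str C)]),
      (forall (A B C : fstruct L)
              (f : 'I_(fsize A) -> 'I_(fsize B))
              (g : 'I_(fsize A) -> 'I_(fsize C)),
         K A -> K B -> K C ->
         embedding (fst_str A) (fst_str B) f ->
         embedding (fst_str A) (fst_str C) g ->
         exists (D : fstruct L) (f' : 'I_(fsize B) -> 'I_(fsize D))
                (g' : 'I_(fsize C) -> 'I_(fsize D)),
           [/\ K D, embedding (fst_str B) (fst_str D) f',
               embedding (fst_str C) (fst_str D) g' &
               forall a, f' (f a) = g' (g a)]),
      (exists e : nat -> fstruct L,
         forall A, K A -> exists i, isomorphic A (e i)) &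
      (forall m : nat, exists A, K A /\ (m <= fsize A)%N)].

Definition locally_finite (L : signature) (T : eqType) (F : structure L T) :=
  forall s : seq T, exists s' : seq T,
    {subset s <= s'} /\
    forall f (x : 'I_(far f) -> T), (forall i, x i \in s') -> fint F f x \in s'.

(* Ultrahomogeneity: every isomorphism between finite substructures      *)
(* extends to an automorphism (phrased with embeddings of a finite       *)
(* structure A: any two copies of A in F are moved onto each other).     *)
Definition ultrahomogeneous (L : signature) (T : Type) (F : structure L T) :=
  forall (A : fstruct L) (e1 e2 : 'I_(fsize A) -> T),
    embedding (fst_str A) F e1 -> embedding (fst_str A) F e2 ->
    exists g : aut F, forall i, g (e1 i) = e2 i.

Definition is_Flim (L : signature) (K : fclass L) (T : countType)
  (F : structure L T) : Prop :=
  [/\ locally_finite F, ultrahomogeneous F &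
      forall A : fstruct L, K A <-> embeds A F].

(* L = L0 together with one new binary relation symbol < (= None). *)
Definition ext_sig (L0 : signature) : signature :=
  {| rsym := option (rsym L0);
     rar := fun o => if o is Some r then rar r else 2%N;
     fsym := fsym L0;
     far := @far L0 |}.

Definition order_of (L0 : signature) (A : Type) (S : structure (ext_sig L0) A)
  : rel A :=
  fun a b => rint S None (fun i : 'I_2 => if val i == 0%N then a else b).

Definition reduct (L0 : signature) (A : Type) (S : structure (ext_sig L0) A)
  : structure L0 A :=
  {| rint := fun r => rint S (Some r); fint := fint S |}.

Definition freduct (L0 : signature) (A : fstruct (ext_sig L0)) : fstruct L0 :=
  existT _ (fsize A) (reduct (fst_str A)).

Definition expand (L0 : signature) (A : Type) (S : structure L0 A) (lt : rel A)
  : structure (ext_sig L0) A :=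
  {| rint := fun o =>
       match o return ('I_(@rar (ext_sig L0) o) -> A) -> bool with
       | Some r => rint S r
       | None => fun x => lt (x ord0) (x ord_max)
       end;
     fint := fint S |}.

Definition fexpand (L0 : signature) (A : fstruct L0) (lt : rel 'I_(fsize A))
  : fstruct (ext_sig L0) :=
  existT _ (fsize A) (expand (fst_str A) lt).

Definition reduct_class (L0 : signature) (K : fclass (ext_sig L0)) : fclass L0 :=
  fun A0 => exists A, K A /\ freduct A = A0.

Definition linear_order (A : Type) (lt : rel A) : Prop :=
  [/\ (forall a, ~~ lt a a),
      (forall a b c, lt a b -> lt b c -> lt a c) &
      (forall a b, a <> b -> lt a b \/ lt b a)].

Definition reasonable (L0 : signature) (K : fclass (ext_sig L0)) : Prop :=
  forall (A0 B0 : fstruct L0) (e : 'I_(fsize A0) -> 'I_(fsize B0))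
         (lt : rel 'I_(fsize A0)),
    reduct_class K A0 -> reduct_class K B0 ->
    embedding (fst_str A0) (fst_str B0) e ->
    K (fexpand lt) ->
    exists lt' : rel 'I_(fsize B0),
      K (fexpand lt') /\ forall a b, lt' (e a) (e b) = lt a b.

(* G0-spaces, for G0 = Aut(S) with the pointwise convergence topology   *)
(* (basic neighbourhoods of g: {h | h = g on a finite set s}).          *)

Section Flows.
Context (L : signature) (T : countType) (S : structure L T).

Definition is_action (X : Type) (act : aut S -> X -> X) : Prop :=
  (forall g : aut S, (forall a, g a = a) -> forall x, act g x = x) /\
  (forall g h k : aut S, (forall a, k a = g (h a)) ->
     forall x, act k x = act g (act h x)).

(* joint continuity of G0 x X -> X *)
Definition act_continuous (X : topologicalType) (act : aut S -> X -> X) : Prop :=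
  forall (g : aut S) (x : X) (W : set X), nbhs (act g x) W ->
    exists (s : seq T) (V : set X), nbhs x V /\
      forall h : aut S, (forall a, a \in s -> h a = g a) ->
        forall y, V y -> W (act h y).

Definition G0space (X : topologicalType) (act : aut S -> X -> X) : Prop :=
  [/\ [set: X] !=set0, compact [set: X], hausdorff_space X,
      is_action act & act_continuous act].

Definition invariant (X : Type) (act : aut S -> X -> X) (Y : set X) : Prop :=
  forall g y, Y y -> Y (act g y).

Definition minimal_G0space (X : topologicalType) (act : aut S -> X -> X) :=
  G0space act /\
  forall Y : set X, closed Y -> invariant act Y -> Y = set0 \/ Y = setT.

(* (G0, G) is relatively extremely amenable, G given as a subgroup       *)
(* (predicate) inG of G0.                                                *)
Definition rel_extremely_amenable (inG : aut S -> Prop) : Prop :=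
  forall (X : topologicalType) (act : aut S -> X -> X),
    G0space act -> exists x : X, forall g, inG g -> act g x = x.

End Flows.

Section XK.
Context (L0 : signature) (T : countType) (F : structure (ext_sig L0) T).

Definition LOspace := {ptws (T * T) -> bool}.

Definition F0 : structure L0 T := reduct F.

(* G = Aut(F), as a subset of G0 = Aut(F0) *)
Definition inG (g : aut F0) : Prop :=
  forall a b, order_of F (g a) (g b) = order_of F a b.

Definition lt0 : LOspace := fun p => order_of F p.1 p.2.

Definition actLO (g : aut F0) (R : LOspace) : LOspace :=
  fun p => R (aut_inv g p.1, aut_inv g p.2).

Definition orbitLO (R : LOspace) : set LOspace := range (fun g => actLO g R).

Definition XK : set LOspace := closure (orbitLO lt0).

Definition FixXK : set LOspace :=
  [set R | XK R /\ forall g, inG g -> actLO g R = R].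

Definition transitive_wrt_XK (Y : set LOspace) : Prop :=
  forall y, Y y -> closure (orbitLO y) = XK.

Definition XK_minimal : Prop :=
  forall Y : set LOspace, Y `<=` XK -> closed Y -> invariant actLO Y ->
    Y = set0 \/ Y = XK.

Definition XK_universal : Prop :=
  forall (M : topologicalType) (actM : aut F0 -> M -> M),
    minimal_G0space actM ->
    exists f : LOspace -> M,
      [/\ {within XK, continuous f}, f @` XK = setT &
          forall g R, XK R -> f (actLO g R) = actM g (f R)].

Definition XK_universal_minimal : Prop := XK_minimal /\ XK_universal.

End XK.

(* Main.v *)
Require Import Defs.
From mathcomp Require Import all_boot all_order all_algebra.
From mathcomp Require Import all_classical.
From mathcomp Require Import topology function_spaces.
Set Implicit Arguments.
Unset Strict Implicit.
Unset Printing Implicit Defensive.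
Local Open Scope classical_set_scope.

Section AutLemmas.
Context (L : signature) (A : Type) (S : structure L A).

Lemma autK (g : aut S) a : aut_inv g (g a) = a. Proof. exact: aut_funK. Qed.
Lemma autVK (g : aut S) a : g (aut_inv g a) = a. Proof. exact: aut_invK. Qed.

Lemma emb_inv (g : aut S) : embedding S S (aut_inv g).
Proof.
have [gi gr gf] := aut_emb g.
split.
- exact: (can_inj (@aut_invK _ _ _ g)).
- move=> r x; rewrite -(gr r (aut_inv g \o x)).
  congr (rint S r _); apply: functional_extensionality_dep => i /=.
  exact: (aut_invK g).
- move=> f x; apply: (can_inj (@aut_funK _ _ _ g)).
  rewrite [RHS]autVK -gf; congr (fint S f _); apply: functional_extensionality_dep => i /=.
  exact: (aut_invK g).
Qed.

Definition inv_aut (g : aut S) : aut S :=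
  @Aut L A S (aut_inv g) g (@aut_invK _ _ _ g) (@aut_funK _ _ _ g) (emb_inv g).

Lemma emb_comp (g h : A -> A) : embedding S S g -> embedding S S h ->
  embedding S S (g \o h).
Proof.
move=> [gi gr gf] [hi hr hf]; split.
- by move=> a b /gi /hi.
- move=> r x; rewrite -(hr r x) -(gr r (h \o x)); by [].
- move=> f x /=; rewrite -hf -gf; by [].
Qed.

Definition comp_aut (g h : aut S) : aut S.
refine (@Aut L A S (g \o h) (aut_inv h \o aut_inv g) _ _ (emb_comp (aut_emb g) (aut_emb h))).
- by move=> a /=; rewrite !autK.
- by move=> a /=; rewrite !autVK.
Defined.

Lemma emb_id : embedding S S id.
Proof. by split. Qed.

Definition id_aut : aut S := @Aut L A S id id (fun _ => erefl) (fun _ => erefl) emb_id.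

End AutLemmas.

Section LOtop.
Context (T : countType).
Local Notation LO := (LOspace T).

Lemma LO_compact : compact [set: LO].
Proof.
have bc : compact [set: bool].
  apply: finite_compact. exact: finite_finset.
have := @tychonoff (T * T)%type (fun _ => bool) (fun _ => setT) (fun _ => bc).
have -> : [set f : (T*T)%type -> bool | forall i, [set: bool] (f i)] = setT.
  by apply/seteqP; split.
exact.
Qed.

Lemma LO_hausdorff : hausdorff_space LO.
Proof. exact: (@hausdorff_product (T*T)%type (fun _ => bool) (fun _ => discrete_hausdorff)). Qed.

Definition agree (R Q : LO) (P : seq (T * T)) := forall p, p \in P -> Q p = R p.

Lemma open_eval (p : T * T) (b : bool) : open [set Q : LO | Q p = b].
Proof.
have -> : [set Q : LO | Q p = b] = (@proj (T*T)%type (fun _ => bool) p) @^-1` [set b].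
  by [].
apply: open_comp; last exact: discrete_open.
by move=> Q _; exact: proj_continuous.
Qed.

Lemma open_agree (R : LO) P : open [set Q | agree R Q P].
Proof.
elim: P => [|p P IH].
  have -> : [set Q | agree R Q [::]] = setT by apply/seteqP; split => // Q _ q.
  exact: openT.
have -> : [set Q | agree R Q (p :: P)] = [set Q : LO | Q p = R p] `&` [set Q | agree R Q P].
  apply/seteqP; split => Q.
    by move=> H; split; [apply: H; rewrite inE eqxx | move=> q qP; apply: H; rewrite inE qP orbT].
  by move=> [H1 H2] q; rewrite inE => /orP [/eqP ->|]; [| exact: H2].
exact: openI (open_eval _ _) IH.
Qed.

Lemma nbhs_agree (R : LO) P : nbhs R [set Q | agree R Q P].
Proof. by apply: open_nbhs_nbhs; split; [exact: open_agree|]. Qed.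

End LOtop.

Lemma LO_cvgP (T : countType) (Fl : set_system (LOspace T)) (R : LOspace T) :
  Filter Fl -> (forall p, Fl [set Q : LOspace T | Q p = R p]) -> Fl --> R.
Proof.
move=> FF H.
apply/cvg_sup => i A /=.
move=> [B [[O Oo <-] OR] BA].
apply: (filterS BA); apply: filterS (H i) => Q /= ->; exact: OR.
Qed.

Section LOact.
Context (L0 : signature) (T : countType) (F : structure (ext_sig L0) T).
Local Notation LO := (LOspace T).
Local Notation G0 := (aut (F0 F)).
Local Notation act := (@actLO L0 T F).

Lemma act_agree (g : G0) (R Q : LO) (t : T * T) :
  agree R Q [:: (aut_inv g t.1, aut_inv g t.2)] -> act g Q t = act g R t.
Proof. by move=> H; apply: H; rewrite inE. Qed.

Lemma actLO_cont (g : G0) : continuous (act g).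
Proof.
move=> R; apply: LO_cvgP => t /=.
apply: (filterS _ (nbhs_agree R [:: (aut_inv g t.1, aut_inv g t.2)])).
by move=> Q /act_agree.
Qed.

Lemma actLO_action : is_action act.
Proof.
split.
  move=> g Hg R; apply: functional_extensionality_dep => -[a b].
  have Hi c : aut_inv g c = c.
    by have := Hg (aut_inv g c); rewrite (aut_invK g c) => /esym.
  by rewrite /actLO /= !Hi.
move=> g h k Hk R; apply: functional_extensionality_dep => -[a b].
have Hi c : aut_inv k c = aut_inv h (aut_inv g c).
  apply: (can_inj (aut_funK k)).
  by rewrite (aut_invK k c) Hk (aut_invK h) (aut_invK g c).
by rewrite /actLO /= !Hi.
Qed.

Lemma actLO_act_continuous : act_continuous act.
Proof.
move=> g R W HW.
pose PF := [set W : set LO | exists (s : seq T) (V : set LO), nbhs R V /\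
      forall h : G0, (forall a, a \in s -> h a = g a) ->
        forall y, V y -> W (act h y)].
have PFf : Filter PF.
  constructor.
  - by exists [::], setT; split; [exact: filterT|].
  - move=> A B [s1 [V1 [N1 H1]]] [s2 [V2 [N2 H2]]].
    exists (s1 ++ s2), (V1 `&` V2); split; first exact: filterI.
    move=> h hs y [y1 y2]; split.
      by apply: H1 y1 => a as1; apply: hs; rewrite mem_cat as1.
    by apply: H2 y2 => a as2; apply: hs; rewrite mem_cat as2 orbT.
  - move=> A B AB [s [V [N H]]]; exists s, V; split => // h hs y Vy.
    by apply: AB; apply: H.
suff : cvg_to PF (nbhs (act g R)).
  by move=> /(_ W HW) [s [V [N H]]]; exists s, V.
apply: LO_cvgP => t.
exists [:: aut_inv g t.1; aut_inv g t.2], [set Q | agree R Q [:: (aut_inv g t.1, aut_inv g t.2)]].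
split; first exact: nbhs_agree.
move=> h hs y Hy.
have Hi c : c \in [:: aut_inv g t.1; aut_inv g t.2] -> aut_inv h (g c) = c.
  by move=> /hs <-; rewrite aut_funK.
suff E : act h y t = act g R t by exact: E.
have E1 : aut_inv h t.1 = aut_inv g t.1.
  by have := Hi (aut_inv g t.1); rewrite (aut_invK g t.1); apply; rewrite !inE eqxx.
have E2 : aut_inv h t.2 = aut_inv g t.2.
  by have := Hi (aut_inv g t.2); rewrite (aut_invK g t.2); apply; rewrite !inE eqxx orbT.
rewrite /actLO E1 E2; apply: Hy; by rewrite inE.
Qed.

Lemma actLO_G0space : G0space act.
Proof.
split.
- by exists (lt0 F).
- exact: LO_compact.
- exact: LO_hausdorff.
- exact: actLO_action.
- exact: actLO_act_continuous.
Qed.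

End LOact.

Section Flows.
Context (L : signature) (T : countType) (S : structure L T).
Context (X : topologicalType) (act : aut S -> X -> X).

Lemma act_cont_each : act_continuous act -> forall g, continuous (act g).
Proof.
move=> H g x W /H [s [V [NV HV]]].
by apply: filterS NV => y Vy; apply: (HV g).
Qed.

Lemma closure_invariant (Y : set X) : act_continuous act ->
  Defs.invariant act Y -> Defs.invariant act (closure Y).
Proof.
move=> Hc HY g y Cy B NB.
have /Cy [z [Yz Bz]] : nbhs y (act g @^-1` B) by exact: act_cont_each.
by exists (act g z); split => //; apply: HY.
Qed.

Section Sub.
Variable Y : set X.
Hypothesis Yinv : Defs.invariant act Y.

Definition actY (g : aut S) (y : set_type Y) : set_type Y :=
  exist _ (act g (set_val y)) (mem_set (Yinv g (set_mem (valP y)))).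

Lemma sub_nbhs1 (y : set_type Y) (B : set X) :
  nbhs (set_val y) B -> nbhs y (set_val @^-1` B).
Proof.
move=> /initial_continuous [C [oC Cy CB]].
by exists C.
Qed.

Lemma sub_nbhs2 (y : set_type Y) (B : set (set_type Y)) :
  nbhs y B -> exists O : set X, [/\ open O, O (set_val y) & set_val @^-1` O `<=` B].
Proof.
move=> [B' [[O Oo <-] Oy] BB'].
by exists O.
Qed.

Lemma sub_closed (Z : set (set_type Y)) : closed Z ->
  exists O : set X, open O /\ Z = set_val @^-1` (~` O).
Proof.
move=> /closed_openC [O Oo EO]; exists O; split => //.
rewrite preimage_setC; apply: setC_inj; rewrite setCK -EO; by [].
Qed.

Lemma sub_G0space : closed Y -> Y !=set0 -> G0space act -> G0space actY.
Proof.
move=> cY [y0 Yy0] [_ Xc Xh [Ha1 Ha2] Hac]; split.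
- by exists (exist _ y0 (mem_set Yy0)).
- move=> Fl PFl _.
  have Yc : compact Y by apply: (subclosed_compact cY Xc).
  have FY : (set_val @ Fl) Y.
    apply: (@filterS _ Fl _ setT); last exact: filterT.
    by move=> z _; apply: set_mem (valP z).
  have [p [Yp clp]] := Yc (set_val @ Fl) (fmap_proper_filter set_val PFl) FY.
  exists (exist _ p (mem_set Yp)); split => // A B FA /sub_nbhs2 [O [Oo Op OB]].
  have /clp : (set_val @ Fl) (set_val @` A).
    suff H : Fl (set_val @^-1` (set_val @` A)) by exact: H.
    by apply: filterS FA => z Az; exists z.
  move=> /(_ O (open_nbhs_nbhs (conj Oo Op))) [q [[z Az <-] Oz]].
  by exists z; split => //; apply: OB.
- move=> p q clpq; apply: val_inj; apply: Xh => A B NA NB.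
  have [z [Az Bz]] := clpq _ _ (sub_nbhs1 NA) (sub_nbhs1 NB).
  by exists (set_val z).
- split.
    by move=> g Hg y; apply: val_inj; rewrite /= Ha1.
  by move=> g h k Hk y; apply: val_inj; rewrite /= (Ha2 g h k).
- move=> g y W /sub_nbhs2 [O [Oo Oy OW]].
  have [s [V [NV HV]]] := Hac g (set_val y) O (open_nbhs_nbhs (conj Oo Oy)).
  exists s, (set_val @^-1` V); split; first exact: sub_nbhs1.
  by move=> h hs z Vz; apply: OW; apply: (HV h hs).
Qed.

Definition minimal_set :=
  [/\ closed Y, Defs.invariant act Y, Y !=set0 &
     forall Y' : set X, closed Y' -> Defs.invariant act Y' -> Y' !=set0 ->
        Y' `<=` Y -> Y' = Y].

Lemma sub_minimal : minimal_set -> G0space act -> minimal_G0space actY.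
Proof.
move=> [cY _ nY mY] HG; split; first exact: sub_G0space.
move=> Z cZ iZ.
case: (pselect (exists z, Z z)) => [[z Zz]|nZ]; last first.
  by left; apply/seteqP; split => // w Zw; apply: nZ; exists w.
right; have [O [Oo EZ]] := sub_closed cZ.
have E : set_val @` Z = Y `&` ~` O.
  apply/seteqP; split.
    move=> _ [w Zw <-]; split; first exact: set_mem (valP w).
    by move: Zw; rewrite EZ.
  move=> w [Yw Ow]; exists (exist _ w (mem_set Yw)) => //.
  by rewrite EZ.
have EY : Y `&` ~` O = Y.
  apply: mY.
  - by apply: closedI => //; rewrite closedC.
  - move=> g w Hw.
    have [w' Zw' Ew] : (set_val @` Z) w by rewrite E.
    rewrite -E -Ew; by exists (actY g w'); [apply: iZ|].
  - by exists (set_val z); rewrite -E; exists z.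
  - exact: subIsetl.
apply/seteqP; split => // w _.
have : (Y `&` ~` O) (set_val w) by rewrite EY; exact: set_mem (valP w).
by rewrite EZ => -[].
Qed.

End Sub.

Lemma exists_minimal : G0space act -> exists Y, minimal_set Y.
Proof.
move=> [[x0 _] Xc _ _ Hac].
pose P' := [set C : set X | closed (~` C) /\ Defs.invariant act (~` C) /\ ~` C !=set0].
have [C [[cC [iC nC]] maxC]] : exists C, P' C /\ (forall B, C `<` B -> ~ P' B).
  apply: Zorn_bigcup => Fc FcP tot.
  split; [|split].
  - rewrite closedC; apply: bigcup_open => C /FcP [+ _]; by rewrite closedC.
  - move=> g z Hz [C FC Cz]; apply: Hz; exists C => //.
    have [_ [iC _]] := FcP C FC.
    apply: contrapT => nCz; exact: (iC g z nCz Cz).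
  - pose Fl := [set B : set X | exists C, (C = set0 \/ Fc C) /\ ~` C `<=` B].
    have FlP : ProperFilter Fl.
      split.
        move=> [C [HC CB]].
        have [w Cw] : ~` C !=set0.
          by case: HC => [->|/FcP [_ [_ ?]] //]; exists x0; rewrite setC0.
        exact: CB Cw.
      constructor.
      - by exists set0; split; [left|].
      - move=> A B [C1 [H1 S1]] [C2 [H2 S2]].
        case: H1 => [E1|F1].
          exists C2; split; first exact: H2.
          by rewrite E1 setC0 in S1; move=> w ?; split; [apply: S1|apply: S2].
        case: H2 => [E2|F2].
          exists C1; split; first by right.
          by rewrite E2 setC0 in S2; move=> w ?; split; [apply: S1|apply: S2].
        have [C12|C21] := tot _ _ F1 F2.
          exists C2; split; first by right.
          move=> w Hw; split; [apply: S1|apply: S2] => //.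
          by move=> /C12.
        exists C1; split; first by right.
        move=> w Hw; split; [apply: S1|apply: S2] => //.
        by move=> /C21.
      - by move=> A B AB [C [HC CA]]; exists C; split => //; apply: subset_trans AB.
    have [p [_ clp]] := Xc Fl FlP (filterT).
    exists p => -[C FC Cp].
    have [cC _] := FcP C FC.
    have : closure (~` C) p.
      move=> B NB; apply: clp => //; exists C; split => //; by right.
    by rewrite -(proj1 (closure_id _) cC) => /(_ Cp).
exists (~` C); split => // Y' cY' iY' nY' sY'.
apply: contrapT => neq.
apply: (maxC (~` Y')).
  split; first by move=> w Cw Yw; apply: (sY' w Yw).
  move=> sub; apply: neq; apply/seteqP; split => // w Cw.
  by apply: contrapT => /sub.
by rewrite /P' /= setCK.
Qed.

End Flows.

Section Key.
Context (L0 : signature) (T : countType) (F : structure (ext_sig L0) T).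
Local Notation G0 := (aut (F0 F)).

Lemma rintNone (y : 'I_2 -> T) : rint F None y = order_of F (y ord0) (y ord_max).
Proof.
rewrite /order_of; congr (rint F None _); apply: functional_extensionality_dep.
by case=> -[|[|m]] Hm //=; congr y; apply: val_inj.
Qed.

Lemma order_ofE (a b : T) :
  order_of F a b = rint F None (fun i : 'I_2 => if val i == 0%N then a else b).
Proof. by []. Qed.

Lemma emb_reduct (k : T -> T) : embedding F F k -> embedding (F0 F) (F0 F) k.
Proof.
move=> [ki kr kf]; split => //.
by move=> r x; exact: (kr (Some r) x).
Qed.

Lemma emb_order (k : T -> T) : embedding F F k ->
  forall a b, order_of F (k a) (k b) = order_of F a b.
Proof.
move=> [_ kr _] a b.
rewrite !order_ofE -(kr None (fun i : 'I_2 => if val i == 0%N then a else b)).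
congr (rint F None _); apply: functional_extensionality_dep => i /=.
by case: ifP.
Qed.

Lemma inv_rel (g : G0) r (x : 'I_(rar r) -> T) :
  rint F (Some r) (aut_inv g \o x) = rint F (Some r) x.
Proof. by have [_ H _] := emb_inv g; exact: (H r x). Qed.

Lemma inv_fun (g : G0) f (x : 'I_(far f) -> T) :
  fint F f (aut_inv g \o x) = aut_inv g (fint F f x).
Proof. by have [_ _ H] := emb_inv g; exact: (H f x). Qed.

Hypothesis Hlf : locally_finite F.
Hypothesis Huh : ultrahomogeneous F.

Lemma key_lemma (s : seq T) : exists P : seq (T * T), forall g h : G0,
  agree (actLO g (lt0 F)) (actLO h (lt0 F)) P ->
  exists k : G0, inG k /\ forall a, a \in s -> k (aut_inv g a) = aut_inv h a.
Proof.
have [s1 [ss1 cl1]] := Hlf s.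
pose s' := undup s1.
pose n := size s'.
pose t := in_tuple s'.
pose sg : 'I_n -> T := tnth t.
have sgi : injective sg by apply/tuple_uniqP; exact: undup_uniq.
have sgs i : sg i \in s1 by rewrite -mem_undup; exact: mem_tnth.
have idxP f (x : 'I_(far f) -> 'I_n) : (index (fint F f (sg \o x)) s' < n)%N.
  rewrite index_mem mem_undup; apply: cl1 => i; exact: sgs.
have sg_idx f x : sg (Ordinal (idxP f x)) = fint F f (sg \o x).
  rewrite /sg (tnth_nth (fint F f (sg \o x))) /=.
  by apply: nth_index; rewrite mem_undup; apply: cl1 => i; exact: sgs.
exists [seq (a, b) | a <- s', b <- s'] => g h Hgh.
pose SA : structure (ext_sig L0) 'I_n :=
  {| rint := fun r x => rint F r (aut_inv g \o sg \o x);
     fint := fun f x => Ordinal (idxP f x) |}.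
pose A : fstruct (ext_sig L0) := existT _ n SA.
pose e1 : 'I_(fsize A) -> T := aut_inv g \o sg.
pose e2 : 'I_(fsize A) -> T := aut_inv h \o sg.
have inj_inv (k : G0) : injective (aut_inv k) by exact: (can_inj (aut_invK k)).
have He1 : embedding (fst_str A) F e1.
  split.
  - by move=> i j /(inj_inv g) /sgi.
  - by [].
  - move=> f x /=; rewrite /e1 /= sg_idx -inv_fun; by [].
have He2 : embedding (fst_str A) F e2.
  split.
  - by move=> i j /(inj_inv h) /sgi.
  - case => [r|] x /=.
      by rewrite /e2 /= (inv_rel h (sg \o x)) -(inv_rel g (sg \o x)).
    rewrite !rintNone /=.
    have := Hgh (sg (x ord0), sg (x ord_max)).
    rewrite /actLO /lt0 /= => -> //.
    by apply: allpairs_f; rewrite mem_undup; apply: sgs.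
  - move=> f x /=; rewrite /e2 /= sg_idx -inv_fun; by [].
have [k Hk] := Huh He1 He2.
pose k0 : G0 := @Aut _ _ (F0 F) k (aut_inv k) (aut_funK k) (aut_invK k)
  (emb_reduct (aut_emb k)).
exists k0; split.
  by move=> a b; exact: (emb_order (aut_emb k)).
move=> a as1.
have as' : a \in s' by rewrite mem_undup; exact: ss1.
have iP : (index a s' < n)%N by rewrite index_mem.
have Ei : sg (Ordinal iP) = a.
  by rewrite /sg (tnth_nth a) /=; exact: nth_index.
by rewrite -Ei; exact: (Hk _).
Qed.

End Key.

Section Main.
Context (L0 : signature) (T : countType) (F : structure (ext_sig L0) T).
Local Notation LO := (LOspace T).
Local Notation G0 := (aut (F0 F)).
Local Notation act := (@actLO L0 T F).
Local Notation lt := (lt0 F).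

Lemma agree_cat (R Q : LO) P1 P2 : agree R Q (P1 ++ P2) <-> agree R Q P1 /\ agree R Q P2.
Proof.
split.
  by move=> H; split => p Hp; apply: H; rewrite mem_cat Hp ?orbT.
by move=> [H1 H2] p; rewrite mem_cat => /orP [/H1|/H2].
Qed.

Lemma act_id (R : LO) : act (id_aut (F0 F)) R = R.
Proof. by have [H _] := actLO_action F; apply: H. Qed.

Lemma act_comp (g h : G0) (R : LO) : act (comp_aut g h) R = act g (act h R).
Proof. by have [_ H] := actLO_action F; apply: H. Qed.

Lemma lt0_fix (g : G0) : inG g -> act g lt = lt.
Proof.
move=> Hg; apply: functional_extensionality_dep => -[a b].
rewrite /actLO /lt0 /= -[in RHS](aut_invK g a) -[in RHS](aut_invK g b).
by rewrite Hg.
Qed.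

Lemma orbit_inv (R : LO) : Defs.invariant act (orbitLO F R).
Proof. by move=> g _ [h _ <-]; exists (comp_aut g h) => //; rewrite act_comp. Qed.

Lemma orbit_self (R : LO) : orbitLO F R R.
Proof. by exists (id_aut (F0 F)) => //; rewrite act_id. Qed.

Lemma XK_closed : closed (XK F).
Proof. exact: closed_closure. Qed.

Lemma closure_orbit_inv (R : LO) : Defs.invariant act (closure (orbitLO F R)).
Proof. apply: closure_invariant; [exact: actLO_act_continuous | exact: orbit_inv]. Qed.

Lemma XK_inv : Defs.invariant act (XK F).
Proof. exact: closure_orbit_inv. Qed.

Lemma lt0_XK : XK F lt.
Proof. apply: subset_closure; exact: orbit_self. Qed.

Lemma XK_compact : compact (XK F).
Proof. have := @subclosed_compact _ (XK F) setT XK_closed. apply => //; exact: LO_compact. Qed.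

Lemma orbit_closure_sub (Y : set LO) (y : LO) : closed Y -> Defs.invariant act Y ->
  Y y -> closure (orbitLO F y) `<=` Y.
Proof.
move=> cY iY Yy; rewrite (proj1 (closure_id Y) cY); apply: closureS.
by move=> _ [g _ <-]; apply: iY.
Qed.

Lemma trans_from_minimal : XK_minimal F -> transitive_wrt_XK F (FixXK F).
Proof.
move=> Hmin y [Xy _].
have sub : closure (orbitLO F y) `<=` XK F.
  exact: (orbit_closure_sub XK_closed XK_inv Xy).
case: (Hmin _ sub (@closed_closure _ _) (@closure_orbit_inv y)) => // E.
have : closure (orbitLO F y) y by apply: subset_closure; exact: orbit_self.
by rewrite E.
Qed.

Lemma rea_from_universal : XK_universal F -> rel_extremely_amenable (@inG L0 T F).
Proof.
move=> Hu X actX HG.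
have [Y mY] := exists_minimal HG.
have [cY iY nY _] := mY.
have HM := sub_minimal iY mY HG.
have [f [_ _ Hf]] := Hu _ _ HM.
exists (set_val (f lt)) => g Hg.
have := Hf g lt lt0_XK; rewrite lt0_fix // => E.
by rewrite [in RHS]E.
Qed.

Hypothesis Hlf : locally_finite F.
Hypothesis Huh : ultrahomogeneous F.

Lemma minimal_from_a : rel_extremely_amenable (@inG L0 T F) ->
  transitive_wrt_XK F (FixXK F) -> XK_minimal F.
Proof.
move=> Hrea Htr Y sY cY iY.
case: (pselect (exists y, Y y)) => [[y Yy]|nY]; last first.
  by left; apply/seteqP; split => // w Yw; apply: nY; exists w.
right.
have HG := sub_G0space iY cY (ex_intro _ y Yy) (actLO_G0space F).
have [z Hz] := Hrea _ _ HG.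
pose R := set_val z.
have YR : Y R by exact: set_mem (valP z).
have FR : FixXK F R.
  split; first exact: sY.
  by move=> g Hg; have := congr1 set_val (Hz g Hg).
have := Htr R FR => E.
apply/seteqP; split => //.
rewrite -E; exact: orbit_closure_sub.
Qed.

Section Univ.
Variables (M : topologicalType) (actM : G0 -> M -> M).
Hypothesis HM : minimal_G0space actM.
Variable x : M.
Hypothesis Hx : forall g, inG g -> actM g x = x.

Definition Zr (R : LO) (m : M) := forall (P : seq (T * T)) (U : set M),
  open U -> U m -> exists g : G0, agree R (act g lt) P /\ U (actM g x).

Lemma open_sub (m : M) (V : set M) : nbhs m V -> exists V', [/\ open V', V' m & V' `<=` V].
Proof. by rewrite nbhsE => -[V' [oV' V'm] sV']; exists V'. Qed.

Lemma Zr_uniq R m1 m2 : Zr R m1 -> Zr R m2 -> m1 = m2.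
Proof.
have [[_ _ Mh [Ha1 Ha2] Hac] _] := HM.
move=> Z1 Z2; apply: contrapT => neq.
have := Mh; rewrite open_hausdorff => /(_ m1 m2 (introN eqP neq)).
move=> [[U1 U2] /= [/set_mem m1U1 /set_mem m2U2] [o1 o2 /eqP disj]].
have [s [V [NV HV]]] : exists (s : seq T) (V : set M), nbhs m1 V /\
    forall h : G0, (forall a, a \in s -> h a = id_aut (F0 F) a) ->
      forall y, V y -> U1 (actM h y).
  apply: Hac; rewrite Ha1 //; exact: open_nbhs_nbhs.
have [V' [oV' V'm1 V'V]] := open_sub NV.
have [P HP] := key_lemma Hlf Huh s.
have [g [Ag Vg]] := Z1 P V' oV' V'm1.
have [h [Ah Uh]] := Z2 P U2 o2 m2U2.
have [k [Gk Hk]] : exists k : G0, inG k /\ forall a, a \in s -> k (aut_inv g a) = aut_inv h a.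
  apply: HP => p Hp; by rewrite (Ah p Hp) (Ag p Hp).
pose v := comp_aut h (comp_aut k (inv_aut g)).
have Hv : forall a, a \in s -> v a = id_aut (F0 F) a.
  by move=> a Ha; rewrite /= Hk // (aut_invK h a).
have := HV v Hv (actM g x) (V'V _ Vg).
have E1 : actM (comp_aut h k) x = actM v (actM g x).
  apply: Ha2 => a /=; by rewrite (aut_funK g a).
have E2 : actM (comp_aut h k) x = actM h (actM k x) by apply: Ha2.
rewrite -E1 E2 Hx // => U1h.
have : (U1 `&` U2) (actM h x) by [].
by rewrite disj.
Qed.

Lemma Zr_exists R : XK F R -> exists m, Zr R m.
Proof.
have [[_ Mc _ _ _] _] := HM.
move=> XR.
pose Gf := [set W : set M | exists P, forall g : G0, agree R (act g lt) P -> W (actM g x)].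
have GP : ProperFilter Gf.
  split.
    move=> [P HP].
    have [_ [[g _ <-] Ag]] := XR _ (nbhs_agree R P).
    exact: (HP g Ag).
  constructor.
  - by exists [::].
  - move=> A B [P1 H1] [P2 H2]; exists (P1 ++ P2) => g /agree_cat [A1 A2].
    by split; [apply: H1|apply: H2].
  - by move=> A B AB [P HP]; exists P => g /HP /AB.
have [m [_ clm]] := Mc Gf GP filterT.
exists m => P U oU Um.
have GW : Gf [set y | exists g : G0, agree R (act g lt) P /\ y = actM g x].
  by exists P => g Ag; exists g.
have [_ [[g [Ag ->]] Ug]] := clm _ _ GW (open_nbhs_nbhs (conj oU Um)).
by exists g.
Qed.

Lemma Zr_act (g : G0) R m : Zr R m -> Zr (act g R) (actM g m).
Proof.
have [[_ _ _ [Ha1 Ha2] Hac] _] := HM.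
move=> Zm P U oU Um.
have [s [V [NV HV]]] := Hac g m U (open_nbhs_nbhs (conj oU Um)).
have [V' [oV' V'm V'V]] := open_sub NV.
pose P' := [seq (aut_inv g p.1, aut_inv g p.2) | p <- P].
have [h [Ah Vh]] := Zm P' V' oV' V'm.
exists (comp_aut g h); split.
  move=> p Hp.
  have := Ah (aut_inv g p.1, aut_inv g p.2) (map_f _ Hp).
  by rewrite /actLO /=.
rewrite (Ha2 g h) //; exact: (HV g) (V'V _ Vh).
Qed.

Lemma univ_map : exists f : LO -> M,
  [/\ {within XK F, continuous f}, f @` XK F = setT &
      forall g R, XK F R -> f (act g R) = actM g (f R)].
Proof.
have [[[m0 _] Mc Mh [Ha1 Ha2] Hac] Mmin] := HM.
have : forall R : LO, exists m, XK F R -> Zr R m.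
  move=> R; case: (pselect (XK F R)) => XR.
    by have [m Hm] := Zr_exists XR; exists m.
  by exists m0.
move=> /choice [f Hf].
have Hcont : {within XK F, continuous f}.
  apply/subspace_continuousP => R XR W /= NW.
  have [W' [oW' W'R sW']] := open_sub NW.
  suff [P HP] : exists P, forall R', agree R R' P -> XK F R' -> W' (f R').
    apply: (filterS _ (nbhs_agree R P)) => R' AR' XR'.
    by apply: sW'; apply: HP.
  apply: contrapT => Hno.
  pose Hf' := [set V : set M | exists P, forall R', agree R R' P -> XK F R' ->
     ~ W' (f R') -> V (f R')].
  have HP : ProperFilter Hf'.
    split.
      move=> [P HP]; apply: Hno; exists P => R' AR' XR'.
      by apply: contrapT => nW; apply: (HP R' AR' XR' nW).
    constructor.
    - by exists [::].
    - move=> A B [P1 H1] [P2 H2]; exists (P1 ++ P2) => R' /agree_cat [A1 A2] XR' nW.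
      by split; [apply: H1|apply: H2].
    - by move=> A B AB [P HP]; exists P => R' AR' XR' nW; apply: AB; apply: HP.
  have [m [_ clm]] := Mc Hf' HP filterT.
  have nWm : ~ W' m.
    move=> W'm.
    have HnW : Hf' (~` W') by exists [::] => R' _ _ nW.
    have [y [nWy W'y]] := clm _ _ HnW (open_nbhs_nbhs (conj oW' W'm)).
    exact: nWy W'y.
  apply: nWm.
  suff Zm : Zr R m by rewrite (Zr_uniq Zm (Hf R XR)).
  move=> P U oU Um.
  have HV : Hf' [set y | exists R', [/\ agree R R' P, XK F R' & y = f R']].
    by exists P => R' AR' XR' _; exists R'.
  have [_ [[R' [AR' XR' ->]] UR']] := clm _ _ HV (open_nbhs_nbhs (conj oU Um)).
  have [g [Ag Ug]] := Hf R' XR' P U oU UR'.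
  exists g; split => // p Hp; by rewrite (Ag p Hp) (AR' p Hp).
have Heq : forall g R, XK F R -> f (act g R) = actM g (f R).
  move=> g R XR.
  apply: (@Zr_uniq (act g R)).
    exact: (Hf (act g R) (@XK_inv g R XR)).
  exact: (@Zr_act g R (f R) (Hf R XR)).
exists f; split => //.
have cI : closed (f @` XK F).
  apply: compact_closed => //; exact: continuous_compact Hcont XK_compact.
case: (Mmin _ cI).
- by move=> g _ [R XR <-]; exists (act g R); [exact: (@XK_inv g R XR) | exact: Heq].
- move=> E; have : (f @` XK F) (f lt) by exists lt => //; exact: lt0_XK.
  by rewrite E.
- by [].
Qed.

End Univ.

Lemma universal_from_a : rel_extremely_amenable (@inG L0 T F) -> XK_universal F.
Proof.
move=> Hrea M actM HM.
have [x Hx] := Hrea _ _ (proj1 HM).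
have [f Hf] := univ_map HM Hx; exists f; exact: Hf.
Qed.

End Main.

Unset Implicit Arguments.

Theorem mainTheorem13 (L0 : signature) (K : fclass (ext_sig L0))
  (T : countType) (F : structure (ext_sig L0) T) :
  Fraisse_class K ->
  Fraisse_class (reduct_class K) ->
  (forall A, K A -> linear_order (order_of (fst_str A))) ->
  reasonable K ->
  is_Flim K F ->
  (rel_extremely_amenable (@inG L0 T F) /\ transitive_wrt_XK F (FixXK F))
  <-> XK_universal_minimal F.
Proof.
move=> _ _ _ _ [Hlf Huh _]; split.
- move=> [Hrea Htr]; split.
  + exact: (minimal_from_a Hrea Htr).
  + exact: (universal_from_a Hlf Huh Hrea).
- move=> [Hmin Hu]; split.
  + exact: (rea_from_universal Hu).
  + exact: (trans_from_minimal Hmin).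
Qed.
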